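(* Let $m\in\mathbf{N}$ and let $n\le5$ be a positive integer. If $\mathcal{P}$ is a closed set family of shape $(m^n)$, then $\mathcal{P}$ has type $(m^n)\star\nu$ for some partition $\nu$ of $n-1$ with at most $m$ parts.
   Context: Majorization: for $m$-subsets $X=\{x_1<\dots<x_m\}$, $Y=\{y_1<\dots<y_m\}$ of $\mathbf{N}$, $X\preceq Y$ if $x_i\le y_i$ for all $i$. A set family of shape $(m^n)$ is a collection of $n$ distinct $m$-subsets of $\mathbf{N}$; it is closed if $Y$ in it and $X\preceq Y$ imply $X$ in it; it has type $\lambda$ (largest part $a$, conjugate $\lambda'$) if for each $i\in\{1,\dots,a\}$ exactly $\lambda'_i$ of its sets contain $i$ (closed set families always have a type). For a partition $\nu$ of $n-1$ with $k\le m$ parts, $(m^n)\star\nu$ is the partition obtained from the Young diagram of $(m^n)$ by, for each $1\le i\le k$, deleting $\nu_i$ boxes (from the bottom) of column $m+1-i$ and adding $\nu_i$ boxes to row $i$. *)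

(* Defs.v *)
From mathcomp Require Import all_boot.
Set Implicit Arguments. Unset Strict Implicit. Unset Printing Implicit Defensive.

(* Ground set N = {1,2,3,...}.  An m-subset X = {x_1 < ... < x_m} of N is
   encoded by its increasing enumeration [:: x_1; ...; x_m]. *)
Definition msubset (m : nat) (X : seq nat) : bool :=
  [&& sorted ltn X, size X == m & all (fun x => 0 < x) X].

Definition majorized (X Y : seq nat) : bool :=
  (size X == size Y) && all2 leq X Y.

Definition set_family (m n : nat) (P : seq (seq nat)) : Prop :=
  [/\ uniq P, size P = n & all (msubset m) P].

Definition closed_family (m : nat) (P : seq (seq nat)) : Prop :=
  forall X Y, Y \in P -> msubset m X -> majorized X Y -> X \in P.

Definition is_partition (nu : seq nat) (N : nat) : Prop :=
  [/\ sorted geq nu, all (fun x => 0 < x) nu & sumn nu = N].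

Definition largest_part (lam : seq nat) : nat := foldr maxn 0 lam.
Definition conj_part (lam : seq nat) (i : nat) : nat :=
  count (fun r => i <= r) lam.

Definition has_type (P : seq (seq nat)) (lam : seq nat) : Prop :=
  forall i, 1 <= i <= largest_part lam ->
    count (fun X => i \in X) P = conj_part lam i.

(* (m^n) * nu : starting from the n x m rectangle, for each 1 <= i <= k
   delete the bottom nu_i boxes of column m+1-i (so row j loses one box
   for each i with j > n - nu_i) and add nu_i boxes to row i.  Row j
   (1 <= j <= n) of the result therefore has length
     m - #{ i <= k : n - nu_i < j } + nu_j      (nu_j := 0 for j > k). *)
Definition star (m n : nat) (nu : seq nat) : seq nat :=
  [seq m - count (fun x => n - x < j) nu + nth 0 nu j.-1 | j <- iota 1 n].

(* Main.v *)
Require Import Defs.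
From mathcomp Require Import zify.
From mathcomp Require Import all_boot.
Set Implicit Arguments. Unset Strict Implicit. Unset Printing Implicit Defensive.

Fixpoint lists_of (k : nat) (s : seq nat) : seq (seq nat) :=
  if k is k'.+1 then [seq x :: l | x <- s, l <- lists_of k' s] else [:: [::]].

Fixpoint bitseqs (k : nat) : seq bitseq :=
  if k is k'.+1 then [seq true :: b | b <- bitseqs k'] ++ [seq false :: b | b <- bitseqs k']
  else [:: [::]].

Definition base m := sumn (iota 1 m).
Definition U m := [seq X <- lists_of m (iota 1 (m+4)) | msubset m X && (sumn X <= base m + 4)].

Definition closedU (u : seq (seq nat)) (S : seq (seq nat)) :=
  all (fun Y => all (fun X => majorized X Y ==> (X \in S)) u) S.

Definition nuof m n (S : seq (seq nat)) :=
  [seq x <- [seq n - count (fun X => (m.+1 - j) \in X) S | j <- iota 1 m] | 0 < x].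

Definition is_partitionb (nu : seq nat) N :=
  [&& sorted geq nu, all (fun x => 0 < x) nu & sumn nu == N].

Definition has_typeb (S : seq (seq nat)) lam :=
  all (fun i => count (fun X => i \in X) S == conj_part lam i) (iota 1 (largest_part lam)).

Definition good m n S :=
  let nu := nuof m n S in
  [&& is_partitionb nu n.-1, size nu <= m & has_typeb S (star m n nu)].

Definition check_u m n u :=
  uniq u &&
  all (fun b => let S := mask b u in (size S == n) ==> closedU u S ==> good m n S)
    (bitseqs (size u)).
Definition check m n := check_u m n (U m).

Lemma check_all : all (fun m => all (fun n => check m n) (iota 1 5)) (iota 0 5).
Proof. vm_compute. reflexivity. Qed.

Lemma path_ltn_pos a s : path ltn a s -> all (fun x => a < x) s.
Proof. by move/(order_path_min ltn_trans). Qed.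

Lemma msubset_path m X : msubset m X = path ltn 0 X && (size X == m).
Proof.
rewrite /msubset; case: X => [|x s] /=; first by rewrite andbT.
apply/and4P/andP => [[Hs Hsz Hx _] | [/andP [Hx Hs] Hsz]].
- by rewrite Hx Hs.
- split => //.
  apply/allP => y /(allP (path_ltn_pos Hs)) Hy; lia.
Qed.

Lemma sumn_iotaS b k : sumn (iota b.+1 k) = sumn (iota b k) + k.
Proof. elim: k b => [|k IH] b //=; rewrite IH; lia. Qed.

Lemma sumn_iota_mono b c k : b <= c -> sumn (iota b k) <= sumn (iota c k).
Proof.
move=> Hbc; rewrite -(subnKC Hbc); elim: (c - b) => [|e IH]; first by rewrite addn0.
rewrite addnS sumn_iotaS; lia.
Qed.

Lemma L1 a X : path ltn a X -> sumn (iota a.+1 (size X)) <= sumn X.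
Proof.
elim: X a => [|x X IH] a //= /andP [Hax Hp].
have := IH _ Hp; have := sumn_iota_mono (size X) (Hax : a.+2 <= x.+1); lia.
Qed.

Lemma L2 a X y : path ltn a X -> y \in X ->
  y + sumn (iota a.+1 (size X)) <= sumn X + a + size X.
Proof.
elim: X a => [|x X IH] a //= /andP [Hax Hp]; rewrite inE => /orP [/eqP ->|Hy].
- have := L1 Hp; have := sumn_iota_mono (size X) (Hax : a.+2 <= x.+1); lia.
- have := IH _ Hp Hy; have := sumn_iota_mono (size X) (Hax : a.+2 <= x.+1); lia.
Qed.

Lemma L3 a X k : path ltn a X -> k <= size X ->
  sumn X <= sumn (iota a.+1 (size X)) + (size X - k) -> take k X = iota a.+1 k.
Proof.
elim: X a k => [|x X IH] a [|k] //= /andP [Hax Hp] Hk Hs.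
have Hx : x = a.+1.
  apply/eqP; rewrite eqn_leq Hax andbT; apply/negP => Hc.
  have Hc' : a.+3 <= x.+1 by lia.
  have := L1 Hp; have := sumn_iota_mono (size X) Hc'.
  have := sumn_iotaS a.+2 (size X); lia.
subst x; rewrite (IH a.+1 k Hp) //; lia.
Qed.

Lemma all2_refl (s : seq nat) : all2 leq s s.
Proof. by elim: s => //= x s ->; rewrite leqnn. Qed.

Lemma all2_trans (s t u : seq nat) : all2 leq s t -> all2 leq t u -> all2 leq s u.
Proof.
elim: s t u => [|x s IH] [|y t] [|z u] //= /andP [H1 H2] /andP [H3 H4].
by rewrite (leq_trans H1 H3) (IH _ _ H2 H4).
Qed.

Lemma step a X : path ltn a X -> X != iota a.+1 (size X) ->
  exists Y, [/\ path ltn a Y, size Y = size X, all2 leq Y X & (sumn Y).+1 = sumn X].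
Proof.
elim: X a => [|x X IH] a //= /andP [Hax Hp] Hne.
case: (eqVneq x a.+1) => Hx.
- subst x; have Hne' : X != iota a.+2 (size X) by apply: contra Hne => /eqP HX; rewrite {1}HX /=.
  have [Y [H1 H2 H3 H4]] := IH _ Hp Hne'.
  exists (a.+1 :: Y); split => /=.
  + by rewrite ltnSn H1.
  + by rewrite H2.
  + by rewrite leqnn H3.
  + lia.
- exists (x.-1 :: X); rewrite /= all2_refl; split => //.
  + apply/andP; split; first lia.
    case: X Hp {IH Hne} => //= z X /andP [Hz ->]; rewrite andbT; lia.
  + rewrite andbT; lia.
  + lia.
Qed.

Definition base' m := sumn (iota 1 m).

Lemma chain m X k : msubset m X -> k <= sumn X - sumn (iota 1 m) ->
  exists Y, [/\ msubset m Y, majorized Y X & sumn Y = sumn X - k].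
Proof.
move=> HX; elim: k => [|k IH] Hk.
  exists X; split => //; last lia; by rewrite /majorized eqxx all2_refl.
have [Y [HY HYX HsY]] := IH (ltnW Hk).
move: (HY); rewrite msubset_path => /andP [Hp /eqP Hsz].
have Hne : Y != iota 1 (size Y) by apply/eqP => HYe; rewrite Hsz in HYe; rewrite HYe in HsY; lia.
have [Z [H1 H2 H3 H4]] := step Hp Hne.
exists Z; split.
- by rewrite msubset_path H1 H2 Hsz eqxx.
- move: HYX; rewrite /majorized => /andP [/eqP <- HYX]; by rewrite H2 eqxx (all2_trans H3 HYX).
- lia.
Qed.

Lemma bound m n P X : set_family m n P -> closed_family m P -> X \in P ->
  sumn X - sumn (iota 1 m) < n.
Proof.
case=> HuP HsP HaP Hcl HX.
have HmX : msubset m X by apply: (allP HaP).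
set d := sumn X - _.
pose s1 := [seq sumn X - e | e <- iota 0 d.+1].
have Hu : uniq s1.
  rewrite map_inj_in_uniq ?iota_uniq // => e1 e2; rewrite !mem_iota /=; lia.
have Hsub : {subset s1 <= map sumn P}.
  move=> y /mapP [e]; rewrite mem_iota /= => He ->.
  have [Y [HY HYX HsY]] := chain HmX (He : e <= d).
  rewrite -HsY; apply: map_f; exact: Hcl HX HY HYX.
have := uniq_leq_size Hu Hsub; rewrite /s1 !size_map size_iota HsP; lia.
Qed.

Lemma mem_lists_of k s X : size X = k -> all (fun x => x \in s) X -> X \in lists_of k s.
Proof.
elim: k X => [|k IH] [|x X] //= [Hsz] /andP [Hx HX].
by apply/allpairsP; exists (x, X); rewrite /= Hx IH.
Qed.

Lemma mem_bitseqs (b : bitseq) : b \in bitseqs (size b).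
Proof.
elim: b => [|c b IH] //=; rewrite mem_cat; case: c.
- by rewrite map_f.
- by rewrite orbC map_f.
Qed.

Lemma small m n P : m <= 4 -> 0 < n -> n <= 5 ->
  set_family m n P -> closed_family m P ->
  exists nu : seq nat,
    [/\ is_partition nu n.-1, size nu <= m & has_type P (star m n nu)].
Proof.
move=> Hm Hn0 Hn5 Hsf Hcl.
have Hchk : check m n.
  have := check_all; move/allP/(_ m); rewrite mem_iota => /(_ ltac:(lia)).
  by move/allP/(_ n); rewrite mem_iota; apply; lia.
move: Hchk; rewrite /check /check_u; set u := U m => /andP [Huu /allP Hall].
case: Hsf => HuP HsP HaP.
have Pin : {subset P <= u}.
  move=> X HX; have HmX : msubset m X by apply: (allP HaP).
  have Hb := bound (And3 HuP HsP HaP) Hcl HX.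
  rewrite mem_filter HmX /=; apply/andP; split; first by rewrite /base; lia.
  move: (HmX); rewrite msubset_path => /andP [Hp /eqP Hsz].
  apply: mem_lists_of => //; apply/allP => y Hy; rewrite mem_iota.
  have := L2 Hp Hy; have := allP (path_ltn_pos Hp) y Hy; rewrite Hsz; lia.
set S := filter (mem P) u.
have HpS : perm_eq P S.
  apply: uniq_perm => //; first by rewrite filter_uniq.
  by move=> X; rewrite mem_filter /=; case HX: (X \in P) => //=; rewrite Pin.
have := Hall [seq x \in P | x <- u].
rewrite -{1}(size_map (fun x => x \in P) u) mem_bitseqs => /(_ isT).
rewrite -filter_mask -/S -(perm_size HpS) HsP eqxx /=.
have HcS : closedU u S.
  apply/allP => Y; rewrite mem_filter => /andP [HYP _]; apply/allP => X HXu.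
  apply/implyP => HXY; rewrite mem_filter /= HXu andbT.
  apply: (Hcl X Y HYP) => //; move: HXu; rewrite mem_filter => /andP [/andP [-> _] _] //.
rewrite HcS /good => /and3P [Hpart Hsize Htype].
exists (nuof m n S); split => //.
- by move: Hpart => /and3P [H1 H2 /eqP H3].
- move=> i Hi; have := allP Htype i; rewrite mem_iota; move/(_ ltac:(lia)) => /eqP <-.
  by move/permP: HpS => ->.
Qed.

Lemma path_iota a k : path ltn a (iota a.+1 k).
Proof. by elim: k a => [|k IH] a //=; rewrite ltnSn IH. Qed.

Lemma last_iota a k : last a (iota a.+1 k) = a + k.
Proof. by elim: k a => [|k IH] a //=; rewrite ?addn0 // IH addnS. Qed.

Lemma path_add b a s : path ltn a s -> path ltn (b + a) (map (addn b) s).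
Proof.
elim: s a => [|x s IH] a //= /andP [H1 H2]; rewrite IH // andbT; lia.
Qed.

Lemma path_sub b a s : b <= a -> path ltn a s -> path ltn (a - b) (map (subn^~ b) s).
Proof.
elim: s a => [|x s IH] a //= Hb /andP [H1 H2]; rewrite IH //; [rewrite andbT; lia | lia].
Qed.

Lemma all2_add d s t : all2 leq s t -> all2 leq (map (addn d) s) (map (addn d) t).
Proof.
elim: s t => [|x s IH] [|y t] //= /andP [H1 H2]; rewrite IH // andbT leq_add2l //.
Qed.

Lemma all2_catl (s1 s2 t : seq nat) : all2 leq s1 s1 -> all2 leq s2 t -> all2 leq (s1 ++ s2) (s1 ++ t).
Proof. by elim: s1 => [|x s1 IH] //= /andP [-> H] /IH ->. Qed.

Lemma largest_part_add d x L :
  largest_part (map (addn d) (x :: L)) = d + largest_part (x :: L).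
Proof.
rewrite /largest_part; elim: L x => [|y L IH] x /=; first lia.
move: (IH y) => /= ->; lia.
Qed.

Lemma conj_part_add d L i : d < i ->
  conj_part (map (addn d) L) i = conj_part L (i - d).
Proof.
move=> Hi; rewrite /conj_part count_map; apply: eq_count => r /=; lia.
Qed.

Lemma conj_part_add_le d L i : i <= d -> conj_part (map (addn d) L) i = size L.
Proof.
move=> Hi; rewrite /conj_part count_map -[RHS](count_predT L); apply: eq_count => r /=; lia.
Qed.

Lemma star_add m n nu : 4 <= m -> size nu <= 4 ->
  star m n nu = map (addn (m - 4)) (star 4 n nu).
Proof.
move=> Hm Hs; rewrite /star -map_comp; apply: eq_map => j /=.
have := count_size (fun x => n - x < j) nu; lia.
Qed.

Lemma big m n P : 4 < m -> 0 < n -> n <= 5 ->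
  set_family m n P -> closed_family m P ->
  exists nu : seq nat,
    [/\ is_partition nu n.-1, size nu <= m & has_type P (star m n nu)].
Proof.
move=> Hm Hn0 Hn5 Hsf Hcl.
set d := m - 4.
pose f (T : seq nat) := iota 1 d ++ map (addn d) T.
pose g (X : seq nat) := map (subn^~ d) (drop d X).
have fP : forall T, msubset 4 T -> msubset m (f T).
  move=> T; rewrite !msubset_path => /andP [Hp /eqP Hs].
  have Hp' := path_add d Hp; rewrite addn0 in Hp'.
  rewrite /f cat_path path_iota last_iota add0n Hp' size_cat size_iota size_map Hs.
  apply/eqP; lia.
have gfK : forall T, g (f T) = T.
  move=> T; rewrite /g /f drop_size_cat ?size_iota // -map_comp.
  by rewrite (@eq_map _ _ _ id) ?map_id // => x /=; lia.
have fmaj : forall X Y, majorized X Y -> majorized (f X) (f Y).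
  move=> X Y /andP [/eqP Hs H]; rewrite /majorized /f !size_cat !size_map Hs eqxx /=.
  by apply: all2_catl; [exact: all2_refl | exact: all2_add].
have Pdec : forall X, X \in P -> msubset 4 (g X) /\ X = f (g X).
  move=> X HX; have HmX : msubset m X by case: Hsf => _ _ /allP; apply.
  have Hb := bound Hsf Hcl HX.
  move: (HmX); rewrite msubset_path => /andP [Hp /eqP Hsz].
  have Ht : take d X = iota 1 d.
    apply: L3 Hp _ _; rewrite Hsz; lia.
  have HX2 : X = iota 1 d ++ drop d X by rewrite -Ht cat_take_drop.
  have Hp2 : path ltn d (drop d X).
    by move: Hp; rewrite {1}HX2 cat_path last_iota add0n => /andP [].
  have Hall := path_ltn_pos Hp2.
  split.
  - rewrite msubset_path /g size_map size_drop Hsz.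
    have := path_sub (leqnn d) Hp2; rewrite subnn => ->; apply/eqP; lia.
  - have E : map (addn d \o subn^~ d) (drop d X) = drop d X.
      by rewrite -[RHS]map_id; apply/eq_in_map => x Hx /=; have := allP Hall x Hx; lia.
    by rewrite /f /g -map_comp E -HX2.
pose Q := map g P.
case: Hsf => HuP HsP HaP.
have HQ : set_family 4 n Q.
  split.
  - rewrite map_inj_in_uniq // => X Y HX HY Hg.
    by rewrite (Pdec X HX).2 (Pdec Y HY).2 Hg.
  - by rewrite size_map.
  - by apply/allP => T /mapP [X HX ->]; exact: (Pdec X HX).1.
have HcQ : closed_family 4 Q.
  move=> X Y /mapP [Y0 HY0 ->] HX HXY.
  rewrite -(gfK X); apply: map_f; apply: (Hcl _ Y0 HY0 (fP _ HX)).
  by have := fmaj _ _ HXY; rewrite -(Pdec Y0 HY0).2.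
have [nu [Hpart Hsz Htype]] := small (leqnn 4) Hn0 Hn5 HQ HcQ.
exists nu; split => //; first lia.
have HPf : P = map f Q by rewrite /Q -map_comp -{1}(map_id P); apply/eq_in_map => X /Pdec [].
rewrite (star_add n (ltnW Hm) Hsz).
have Hsn : size (star 4 n nu) = n by rewrite /star size_map size_iota.
case Hst : (star 4 n nu) => [|x L]; first by rewrite -Hsn Hst in Hn0.
rewrite -Hst; move=> i; rewrite -/d Hst largest_part_add -Hst => Hi.
rewrite HPf count_map.
case: (leqP i d) => Hid.
- rewrite conj_part_add_le // Hsn -HsP -(size_map g) -/Q -[RHS](count_predT Q).
  apply: eq_count => T /=; rewrite /f mem_cat mem_iota; apply/orP; left; lia.
- rewrite conj_part_add // -Htype; last first.
    move: Hi; rewrite Hst; lia.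
  apply: eq_count => T /=; rewrite /f mem_cat mem_iota.
  have -> : (1 <= i < 1 + d) = false by lia.
  rewrite /= -{1}(subnKC (ltnW Hid)) mem_map //; exact: addnI.
Qed.

Theorem lemma5p5 (m n : nat) (P : seq (seq nat)) :
  0 < n -> n <= 5 ->
  set_family m n P -> closed_family m P ->
  exists nu : seq nat,
    [/\ is_partition nu n.-1, size nu <= m & has_type P (star m n nu)].
Proof.
move=> Hn0 Hn5; case: (leqP m 4) => Hm.
- exact: small.
- exact: big.
Qed.
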